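(* The capacity region $\mathcal{C}_D$ of the deterministic many-to-one interference channel with gains $n_{ii}$ ($0\le i\le K$) and $n_{0i}$ ($1\le i\le K$) is contained in the set $\overline{\mathcal{C}}$ of nonnegative rate tuples $(r_0,\dots,r_K)$ satisfying the individual rate constraints $$r_i\le n_{ii},\qquad 0\le i\le K,$$ and the $2^K-1$ sum-rate constraints $$r_0+\sum_{i\in S}r_i\le f_{\rm free}(S)+\sum_{k=1}^{n_{00}}f_k(S),\qquad \varnothing\neq S\subseteq\{1,\dots,K\}.$$
   Context: Deterministic many-to-one interference channel: there are $K+1$ users $0,1,\dots,K$ with nonnegative integer gains $n_{ii}$ ($0\le i\le K$) and $n_{0i}$ ($1\le i\le K$); let $q=\max$ of all these gains. At each time the input of user $i$ is $x_i\in\mathbb{F}_2^q$, the outputs are $y_0=\sum_{j=0}^K \mathbf{S}^{q-n_{0j}}x_j$ (with $n_{00}$ the direct gain of user 0) and $y_i=\mathbf{S}^{q-n_{ii}}x_i$ for $1\le i\le K$, where arithmetic is over $\mathbb{F}_2$ and $\mathbf S$ is the $q\times q$ down-shift matrix (ones on the subdiagonal, zeros elsewhere). Each transmitter $i$ has an independent uniformly distributed message to be decoded by receiver $i$; the capacity region is the closure of the set of rate tuples (bits per channel use) for which the error probabilities can be made to vanish. Notation: $(a)^+=\max(a,0)$. For $1\le k\le n_{00}$ let $U_k=\{i:1\le i\le K,\ n_{0i}-n_{ii}<k\le n_{0i}\}$ (the users interfering at level $k$ of receiver 0). For $S\subseteq\{1,\dots,K\}$ let $f_k(S)=\max(|U_k\cap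 S|,1)$, $f_{\rm free}(i)=(n_{ii}-n_{0i})^+ +(n_{0i}-n_{00})^+$ and $f_{\rm free}(S)=\sum_{i\in S}f_{\rm free}(i)$. *)

(* Defs.v *)
From Stdlib Require Import Reals Lra Lia Arith List.
Import ListNotations.
Open Scope R_scope.

(* Gains: [d i] = n_ii for 0 <= i <= K ; [c i] = n_0i for 1 <= i <= K. *)

Definition users (K : nat) : list nat := seq 1 K.
Definition all_users (K : nat) : list nat := seq 0 (S K).

Definition qmax (K : nat) (d c : nat -> nat) : nat :=
  Nat.max (fold_right Nat.max 0%nat (map d (all_users K)))
          (fold_right Nat.max 0%nat (map c (users K))).

Definition g0 (d c : nat -> nat) (u : nat) : nat :=
  match u with O => d O | _ => c u end.

(* Vectors in F_2^q are modelled as functions [nat -> bool] (coordinate j, 0 <= j < q);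
   coordinates >= q are ignored.  (S^m x)_j = x_(j-m) if m <= j, 0 otherwise. *)
Definition shiftbit (m : nat) (x : nat -> bool) (j : nat) : bool :=
  if Nat.leb m j then x (j - m)%nat else false.

Record Code := mkCode {
  msz : nat -> nat;
  enc : nat -> nat -> nat -> nat -> bool;  (* enc i w t j : bit at level j, time t, of user i sending w *)
  dec : nat -> (nat -> nat -> bool) -> nat (* dec i y : receiver i's estimate from its output sequence y t j *)
}.

Definition out0 (K : nat) (d c : nat -> nat) (N : nat) (C : Code) (w : nat -> nat)
  : nat -> nat -> bool :=
  fun t j =>
    if andb (Nat.ltb t N) (Nat.ltb j (qmax K d c)) then
      fold_right xorb false
        (map (fun u => shiftbit (qmax K d c - g0 d c u) (enc C u (w u) t) j) (all_users K))
    else false.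

Definition outi (K : nat) (d c : nat -> nat) (N : nat) (C : Code) (i : nat) (w : nat -> nat)
  : nat -> nat -> bool :=
  fun t j =>
    if andb (Nat.ltb t N) (Nat.ltb j (qmax K d c)) then
      shiftbit (qmax K d c - d i) (enc C i (w i) t) j
    else false.

Definition output (K : nat) (d c : nat -> nat) (N : nat) (C : Code) (i : nat) (w : nat -> nat)
  : nat -> nat -> bool :=
  match i with O => out0 K d c N C w | _ => outi K d c N C i w end.

Fixpoint tuples (l : list nat) : list (list nat) :=
  match l with
  | [] => [[]]
  | m :: l' => flat_map (fun a => map (cons a) (tuples l')) (seq 0 m)
  end.

Definition msgs (K : nat) (C : Code) : list (list nat) :=
  tuples (map (msz C) (all_users K)).

Definition is_error (K : nat) (d c : nat -> nat) (N : nat) (C : Code) (w : list nat) : bool :=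
  existsb (fun u => negb (Nat.eqb (dec C u (output K d c N C u (fun v => nth v w 0%nat)))
                                  (nth u w 0%nat)))
          (all_users K).

(* Error probability for independent uniformly distributed messages:
   P(some receiver decodes its message incorrectly). *)
Definition Perr (K : nat) (d c : nat -> nat) (N : nat) (C : Code) : R :=
  INR (length (filter (is_error K d c N C) (msgs K C))) / INR (length (msgs K C)).

Definition achievable (K : nat) (d c : nat -> nat) (r : nat -> R) : Prop :=
  (forall i, (i <= K)%nat -> 0 <= r i) /\
  exists code : nat -> Code,
    (forall N i, (i <= K)%nat -> Rpower 2 (INR N * r i) <= INR (msz (code N) i)) /\
    Un_cv (fun N => Perr K d c N (code N)) 0.

Definition capacity_region (K : nat) (d c : nat -> nat) (r : nat -> R) : Prop :=
  forall eps, 0 < eps ->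
    exists r', achievable K d c r' /\ forall i, (i <= K)%nat -> Rabs (r i - r' i) < eps.

(* U_k membership: n_0i - n_ii < k <= n_0i (integer inequality) *)
Definition inU (d c : nat -> nat) (k i : nat) : bool :=
  andb (Nat.ltb (c i) (k + d i)) (Nat.leb k (c i)).

Definition fk (K : nat) (d c : nat -> nat) (S : nat -> bool) (k : nat) : nat :=
  Nat.max (length (filter (fun i => andb (S i) (inU d c k i)) (users K))) 1.

(* f_free(i) = (n_ii - n_0i)^+ + (n_0i - n_00)^+  (truncated subtraction = (.)^+) *)
Definition ffree1 (d c : nat -> nat) (i : nat) : nat :=
  (d i - c i + (c i - d O))%nat.

Definition ffree (K : nat) (d c : nat -> nat) (S : nat -> bool) : nat :=
  fold_right Nat.add 0%nat (map (ffree1 d c) (filter S (users K))).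

Definition sum_fk (K : nat) (d c : nat -> nat) (S : nat -> bool) : nat :=
  fold_right Nat.add 0%nat (map (fk K d c S) (seq 1 (d O))).

Definition rate_sum (K : nat) (S : nat -> bool) (r : nat -> R) : R :=
  fold_right Rplus 0 (map r (filter S (users K))).

Definition outer_region (K : nat) (d c : nat -> nat) (r : nat -> R) : Prop :=
  (forall i, (i <= K)%nat -> 0 <= r i /\ r i <= INR (d i)) /\
  (forall S : nat -> bool, (exists i, In i (users K) /\ S i = true) ->
     r O + rate_sum K S r <= INR (ffree K d c S + sum_fk K d c S)).

(* Main.v *)
Require Import Defs.
From Stdlib Require Import Reals Lra Lia Arith List FunctionalExtensionality ZArith.
Import ListNotations.
Open Scope nat_scope.

Fixpoint allbits (n : nat) : list (list bool) :=
  match n with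
  | O => [[]]
  | S n => map (cons true) (allbits n) ++ map (cons false) (allbits n)
  end.

Lemma allbits_len n : length (allbits n) = 2 ^ n.
Proof. induction n; simpl; auto. rewrite length_app, !length_map. lia. Qed.

Lemma allbits_in n bs : length bs = n -> In bs (allbits n).
Proof.
  revert bs; induction n; intros bs H; destruct bs as [|b bs]; simpl in *; try lia; auto.
  apply in_app_iff. destruct b; [left|right]; apply in_map; apply IHn; lia.
Qed.

Lemma sum_const {A} (c : nat) (l : list A) : list_sum (map (fun _ => c) l) = length l * c.
Proof. induction l; simpl; auto. Qed.

Definition prodl (l : list nat) := fold_right Nat.mul 1 l.

Lemma tuples_len l : length (tuples l) = prodl l.
Proof.
  induction l as [|m l IH]; simpl; auto.
  rewrite length_flat_map.
  rewrite (map_ext_in _ (fun _ => prodl l)).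
  2:{ intros; rewrite length_map; auto. }
  rewrite sum_const, length_seq. auto.
Qed.

Lemma tuples_in l w : In w (tuples l) <->
  length w = length l /\ forall k, k < length l -> nth k w 0 < nth k l 0.
Proof.
  revert w; induction l as [|m l IH]; intros w; simpl.
  - split.
    + intros [<-|[]]; split; auto; intros; lia.
    + intros [H _]; destruct w; simpl in *; try lia; auto.
  - rewrite in_flat_map. split.
    + intros [a [Ha Hw]]. apply in_map_iff in Hw. destruct Hw as [w' [<- Hw']].
      apply IH in Hw'. apply in_seq in Ha. destruct Hw' as [H1 H2].
      simpl; split; [lia|]. intros [|k] Hk; simpl; [lia|]. apply H2; lia.
    + intros [H1 H2]. destruct w as [|a w]; simpl in H1; try lia.
      exists a; split.
      * apply in_seq. specialize (H2 0). simpl in H2. lia.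
      * apply in_map. apply IH. split; [lia|]. intros k Hk. apply (H2 (S k)); lia.
Qed.

Lemma tuples_nodup l : NoDup (tuples l).
Proof.
  induction l as [|m l IH]; simpl. constructor; auto; constructor.
  generalize (seq_NoDup m 0). generalize (seq 0 m). intros s Hs.
  induction Hs as [|x s Hx Hs IHs]; simpl. constructor.
  apply NoDup_app.
  - apply NoDup_map_NoDup_ForallPairs; auto. intros a b _ _ He; inversion He; auto.
  - auto.
  - intros y Hy Hy2. apply in_map_iff in Hy. destruct Hy as [y' [<- _]].
    apply in_flat_map in Hy2. destruct Hy2 as [x' [Hx' Hy2]].
    apply in_map_iff in Hy2. destruct Hy2 as [z [Hz _]]. inversion Hz; subst. auto.
Qed.

Lemma map_eq_in {A B} (f g : A -> B) l : map f l = map g l -> forall x, In x l -> f x = g x.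
Proof.
  induction l; simpl; intros H x Hx; [contradiction|]. inversion H.
  destruct Hx; subst; auto.
Qed.

Lemma xor_cancel {A} (f g : A -> bool) (l : list A) u :
  NoDup l -> In u l -> (forall x, In x l -> x <> u -> f x = g x) ->
  fold_right xorb false (map f l) = fold_right xorb false (map g l) -> f u = g u.
Proof.
  intros Hn0; induction Hn0 as [|x l Hx Hn IH]; simpl; intros Hu Hfg Heq; [contradiction|].
  destruct Hu as [->|Hu].
  - assert (E : map f l = map g l).
    { apply map_ext_in. intros a Ha. apply Hfg; auto. intro; subst; contradiction. }
    rewrite E in Heq. destruct (f u), (g u), (fold_right xorb false (map g l)); simpl in *; congruence.
  - assert (H0 : x <> u) by (intro; subst; contradiction).
    rewrite (Hfg x (or_introl eq_refl) H0) in Heq.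
    apply IH; auto.
    destruct (g x), (fold_right xorb false (map f l)), (fold_right xorb false (map g l)); simpl in *; congruence.
Qed.

Lemma count_bound {X : Type} (l : list (list nat)) (good : list nat -> bool)
  (key : list nat -> X) (T : list X) :
  NoDup l ->
  (forall a b, In a l -> In b l -> good a = true -> good b = true -> key a = key b -> a = b) ->
  (forall a, In a l -> good a = true -> In (key a) T) ->
  length (filter good l) <= length T.
Proof.
  intros Hn Hinj Hin.
  rewrite <- (length_map key).
  apply NoDup_incl_length.
  - apply NoDup_map_NoDup_ForallPairs; [|apply NoDup_filter; auto].
    intros a b Ha Hb. apply filter_In in Ha, Hb. apply Hinj; tauto.
  - intros y Hy. apply in_map_iff in Hy. destruct Hy as [a [<- Ha]].
    apply filter_In in Ha. apply Hin; tauto.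
Qed.

Lemma filter_compl {A} (f : A -> bool) l :
  length (filter f l) + length (filter (fun x => negb (f x)) l) = length l.
Proof. induction l; simpl; auto. destruct (f a); simpl; lia. Qed.
Open Scope nat_scope.

Definition W (w : list nat) : nat -> nat := fun v => nth v w 0.

Lemma fold_max_ge x l : In x l -> x <= fold_right Nat.max 0 l.
Proof. induction l; simpl; intros []; subst; lia || (specialize (IHl H); lia). Qed.

Lemma d0_le K d c : d 0 <= qmax K d c.
Proof.
  unfold qmax. assert (d 0 <= fold_right Nat.max 0 (map d (all_users K))).
  { apply fold_max_ge. apply in_map. apply in_seq. lia. } lia.
Qed.

Lemma c_le K d c u : 1 <= u <= K -> c u <= qmax K d c.
Proof.
  intros H. unfold qmax. assert (c u <= fold_right Nat.max 0 (map c (users K))).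
  { apply fold_max_ge. apply in_map. apply in_seq. lia. } lia.
Qed.

Lemma g0_le K d c u : u <= K -> g0 d c u <= qmax K d c.
Proof. destruct u; simpl; intros. apply d0_le. apply c_le; lia. Qed.

Lemma msgs_len K C a : In a (msgs K C) -> length a = S K.
Proof. unfold msgs. intros H. apply tuples_in in H. destruct H as [H _].
  unfold all_users in *. rewrite H, length_map, length_seq. auto. Qed.

Lemma msgs_bound K C a u : In a (msgs K C) -> u <= K -> nth u a 0 < msz C u.
Proof. unfold msgs, all_users. intros H Hu. apply tuples_in in H. destruct H as [_ H].
  rewrite length_map, length_seq in H. specialize (H u ltac:(lia)).
  rewrite nth_indep with (l := map _ _) (d' := msz C 0) in H by (rewrite length_map, length_seq; lia).
  rewrite map_nth, seq_nth in H by lia. auto. Qed.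

Lemma dec_ok K d c N C a u : is_error K d c N C a = false -> u <= K ->
  dec C u (output K d c N C u (W a)) = nth u a 0.
Proof.
  unfold is_error. intros H Hu.
  assert (Hin : In u (all_users K)) by (apply in_seq; lia).
  destruct (dec C u (output K d c N C u (W a)) =? nth u a 0) eqn:E.
  - apply Nat.eqb_eq; auto.
  - exfalso. assert (existsb (fun u0 : nat => negb (dec C u0 (output K d c N C u0 (fun v : nat => nth v a 0)) =? nth u0 a 0)) (all_users K) = true).
    { apply existsb_exists. exists u. split; auto. unfold W in E. rewrite E. auto. }
    congruence.
Qed.

Lemma outi_det K d c N C i a b : 1 <= i ->
  (forall t m, t < N -> m < d i -> enc C i (nth i a 0) t m = enc C i (nth i b 0) t m) ->
  output K d c N C i (W a) = output K d c N C i (W b).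
Proof.
  intros Hi H. destruct i; [lia|]. simpl. unfold outi, W.
  apply functional_extensionality; intro t. apply functional_extensionality; intro j.
  destruct (Nat.ltb t N) eqn:Et; simpl; auto.
  destruct (Nat.ltb j (qmax K d c)) eqn:Ej; simpl; auto.
  apply Nat.ltb_lt in Et, Ej. unfold shiftbit.
  destruct (Nat.leb (qmax K d c - d (S i)) j) eqn:E; auto.
  apply Nat.leb_le in E. apply H; lia.
Qed.

Lemma out0_det K d c N C a b :
  (forall u t m, u <= K -> t < N -> m < g0 d c u ->
     enc C u (nth u a 0) t m = enc C u (nth u b 0) t m) ->
  output K d c N C 0 (W a) = output K d c N C 0 (W b).
Proof.
  intros H. unfold output, out0, W.
  apply functional_extensionality; intro t. apply functional_extensionality; intro j.
  destruct (Nat.ltb t N) eqn:Et; cbn [andb]; auto.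
  destruct (Nat.ltb j (qmax K d c)) eqn:Ej; cbn [andb]; auto.
  apply Nat.ltb_lt in Et, Ej. apply (f_equal (fold_right xorb false)). apply map_ext_in. intros u Hu.
  apply in_seq in Hu. unfold shiftbit.
  destruct (Nat.leb (qmax K d c - g0 d c u) j) eqn:E; auto.
  apply Nat.leb_le in E. apply H; lia.
Qed.

Definition zproj (P : nat -> bool) (K : nat) (w : list nat) : list nat :=
  map (fun u => if P u then 0 else nth u w 0) (all_users K).

Lemma zproj_eq P K a b u : zproj P K a = zproj P K b -> u <= K -> P u = false ->
  nth u a 0 = nth u b 0.
Proof.
  intros H Hu Hp. assert (Hin : In u (all_users K)) by (apply in_seq; lia).
  pose proof (map_eq_in _ _ _ H u Hin) as E. simpl in E.
  rewrite Hp in E. auto.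
Qed.
Arguments zproj_eq P K a b u : clear implicits.

Definition sizes' (P : nat -> bool) K (C : Code) :=
  map (fun u => if P u then 1 else msz C u) (all_users K).

Lemma zproj_in P K C a : In a (msgs K C) -> In (zproj P K a) (tuples (sizes' P K C)).
Proof.
  intros Ha. apply tuples_in. unfold zproj, sizes', all_users. rewrite !length_map. split; auto.
  intros k Hk. rewrite length_seq in Hk.
  rewrite nth_indep with (l := map (fun u => if P u then 0 else nth u a 0) _) (d' := (if P 0 then 0 else nth 0 a 0)) by (rewrite length_map, length_seq; lia).
  rewrite nth_indep with (l := map (fun u => if P u then 1 else msz C u) _) (d' := (if P 0 then 1 else msz C 0)) by (rewrite length_map, length_seq; lia).
  rewrite (map_nth (fun u => if P u then 0 else nth u a 0)), (map_nth (fun u => if P u then 1 else msz C u)), !seq_nth by lia. simpl.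
  destruct (P k); auto. apply (msgs_bound K); auto; lia.
Qed.

Lemma msgs_eq K C a b : In a (msgs K C) -> In b (msgs K C) ->
  (forall u, u <= K -> nth u a 0 = nth u b 0) -> a = b.
Proof.
  intros Ha Hb H. apply nth_ext with (d := 0) (d' := 0).
  - rewrite (msgs_len _ _ _ Ha), (msgs_len _ _ _ Hb); auto.
  - intros n Hn. rewrite (msgs_len _ _ _ Ha) in Hn. apply H; lia.
Qed.

Inductive Idx := IY (t L : nat) | IX (u t m : nat).

Definition F K d c N C (w : list nat) (i : Idx) : bool :=
  match i with
  | IY t L => out0 K d c N C (W w) t (qmax K d c - L)
  | IX u t m => enc C u (nth u w 0) t m
  end.

Definition key K d c N C (P : nat -> bool) (I : list Idx) (w : list nat) :=
  (zproj P K w, map (F K d c N C w) I).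

Lemma key_in K d c N C P I a : In a (msgs K C) ->
  In (key K d c N C P I a) (list_prod (tuples (sizes' P K C)) (allbits (length I))).
Proof.
  intros Ha. apply in_prod. apply zproj_in; auto. apply allbits_in. apply length_map.
Qed.
Open Scope nat_scope.

Definition Iind (N : nat) (d : nat -> nat) (i : nat) : list Idx :=
  flat_map (fun t => map (fun m => IX i t m) (seq 0 (d i))) (seq 0 N).

Lemma Iind_len N d i : length (Iind N d i) = N * d i.
Proof.
  unfold Iind. rewrite (flat_map_constant_length (c := d i)).
  - rewrite length_seq; auto.
  - intros; rewrite length_map, length_seq; auto.
Qed.

Lemma indiv_inj K d c N C i a b : i <= K ->
  In a (msgs K C) -> In b (msgs K C) ->
  is_error K d c N C a = false -> is_error K d c N C b = false ->
  key K d c N C (fun u => u =? i) (Iind N d i) a = key K d c N C (fun u => u =? i) (Iind N d i) b ->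
  a = b.
Proof.
  intros Hi Ha Hb Ea Eb Hk. unfold key in Hk. pose proof (f_equal fst Hk) as Hz. pose proof (f_equal snd Hk) as HF. cbn [fst snd] in Hz, HF.
  assert (Hbits : forall t m, t < N -> m < d i -> enc C i (nth i a 0) t m = enc C i (nth i b 0) t m).
  { intros t m Ht Hm. apply (map_eq_in _ _ _ HF (IX i t m)).
    unfold Iind. apply in_flat_map. exists t. split. apply in_seq; lia.
    apply in_map. apply in_seq; lia. }
  assert (Hoth : forall u, u <= K -> u <> i -> nth u a 0 = nth u b 0).
  { intros u Hu Hne. apply (zproj_eq (fun u => u =? i) K); auto. apply Nat.eqb_neq; auto. }
  assert (Hw : nth i a 0 = nth i b 0).
  { rewrite <- (dec_ok K d c N C a i), <- (dec_ok K d c N C b i); auto.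
    f_equal. destruct i as [|i].
    - apply out0_det. intros u t m Hu Ht Hm. destruct (Nat.eq_dec u 0) as [->|Hne].
      + apply Hbits; auto.
      + rewrite (Hoth u); auto.
    - apply outi_det; [lia|]. auto. }
  apply (msgs_eq K C); auto. intros u Hu. destruct (Nat.eq_dec u i) as [->|]; auto.
Qed.

Definition US K d c (S : nat -> bool) L := filter (fun i => andb (S i) (inU d c L i)) (users K).
Definition freem (d c : nat -> nat) u := seq 0 (c u - d 0) ++ seq (c u) (d u - c u).

Definition Iblock K d c S t : list Idx :=
  map (fun L => IY t L) (seq 1 (d 0)) ++
  flat_map (fun L => map (fun u => IX u t (c u - L)) (tl (US K d c S L))) (seq 1 (d 0)) ++
  flat_map (fun u => map (fun m => IX u t m) (freem d c u)) (filter S (users K)).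

Definition Isum K d c S N := flat_map (Iblock K d c S) (seq 0 N).

Definition Pz (S : nat -> bool) u := orb (u =? 0) (S u).

Section SumInj.
Variables (K : nat) (d c : nat -> nat) (N : nat) (C : Code) (S : nat -> bool) (a b : list nat).
Hypotheses (Ha : In a (msgs K C)) (Hb : In b (msgs K C))
  (Ea : is_error K d c N C a = false) (Eb : is_error K d c N C b = false)
  (Hz : zproj (Pz S) K a = zproj (Pz S) K b)
  (HF : forall x, In x (Isum K d c S N) -> F K d c N C a x = F K d c N C b x).

Let q := qmax K d c.

Lemma notS u : 1 <= u <= K -> S u = false -> nth u a 0 = nth u b 0.
Proof.
  intros Hu Hs. apply (zproj_eq (Pz S) K); auto; try lia. unfold Pz. rewrite Hs.
  destruct u; simpl; auto; lia.
Qed.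

Lemma inIsum t x : t < N -> In x (Iblock K d c S t) -> In x (Isum K d c S N).
Proof. intros Ht Hx. apply in_flat_map. exists t; split; auto. apply in_seq; lia. Qed.

Lemma HY t L : t < N -> 1 <= L <= d 0 ->
  out0 K d c N C (W a) t (q - L) = out0 K d c N C (W b) t (q - L).
Proof.
  intros Ht HL. apply (HF (IY t L)). apply (inIsum t); auto. unfold Iblock.
  apply in_app_iff; left. apply in_map. apply in_seq; lia.
Qed.

Lemma Htl t L u : t < N -> 1 <= L <= d 0 -> In u (tl (US K d c S L)) ->
  enc C u (nth u a 0) t (c u - L) = enc C u (nth u b 0) t (c u - L).
Proof.
  intros Ht HL Hu. apply (HF (IX u t (c u - L))). apply (inIsum t); auto. unfold Iblock.
  apply in_app_iff; right. apply in_app_iff; left. apply in_flat_map. exists L.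
  split. apply in_seq; lia. apply (in_map (fun u => IX u t (c u - L))); auto.
Qed.

Lemma Hfree t u m : t < N -> 1 <= u <= K -> S u = true -> In m (freem d c u) ->
  enc C u (nth u a 0) t m = enc C u (nth u b 0) t m.
Proof.
  intros Ht Hu Hs Hm. apply (HF (IX u t m)). apply (inIsum t); auto. unfold Iblock.
  apply in_app_iff; right. apply in_app_iff; right. apply in_flat_map. exists u.
  split. apply filter_In. split; auto. apply in_seq; lia. apply (in_map (fun m => IX u t m)); auto.
Qed.

Lemma step1 : output K d c N C 0 (W a) = output K d c N C 0 (W b).
Proof.
  unfold output.
  apply functional_extensionality; intro t. apply functional_extensionality; intro j.
  destruct (Nat.ltb t N) eqn:Et; [|unfold out0; rewrite Et; auto].
  destruct (Nat.ltb j q) eqn:Ej; [|unfold out0; fold q; rewrite Et, Ej; auto].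
  apply Nat.ltb_lt in Et, Ej.
  pose proof (d0_le K d c) as Hd0. fold q in Hd0.
  destruct (Nat.le_gt_cases (q - d 0) j) as [Hj|Hj].
  - pose proof (HY t (q - j) Et ltac:(lia)) as H. replace (q - (q - j)) with j in H by lia. auto.
  - unfold out0. fold q. rewrite (proj2 (Nat.ltb_lt _ _) Et), (proj2 (Nat.ltb_lt _ _) Ej).
    cbn [andb]. apply (f_equal (fold_right xorb false)). apply map_ext_in.
    intros u Hu. apply in_seq in Hu. unfold W. cbv beta. unfold shiftbit.
    destruct u as [|u].
    + simpl. fold q. destruct (Nat.leb (q - d 0) j) eqn:E; auto.
      apply Nat.leb_le in E; lia.
    + unfold g0. fold q. destruct (S (Datatypes.S u)) eqn:Es.
      * destruct (Nat.leb (q - c (Datatypes.S u)) j) eqn:E; auto.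
        apply Nat.leb_le in E. pose proof (c_le K d c (Datatypes.S u) ltac:(lia)). fold q in H.
        apply Hfree; auto; try lia. unfold freem. apply in_app_iff; left. apply in_seq; lia.
      * rewrite (notS (Datatypes.S u)); auto; lia.
Qed.

Lemma step2 : nth 0 a 0 = nth 0 b 0.
Proof.
  rewrite <- (dec_ok K d c N C a 0), <- (dec_ok K d c N C b 0); auto; try lia.
  rewrite step1; auto.
Qed.

Definition Q L := forall u t m, 1 <= u <= K -> S u = true -> t < N -> m < d u -> m + L <= c u ->
  enc C u (nth u a 0) t m = enc C u (nth u b 0) t m.

Lemma wu u : 1 <= u <= K ->
  (forall t m, t < N -> m < d u -> enc C u (nth u a 0) t m = enc C u (nth u b 0) t m) ->
  nth u a 0 = nth u b 0.
Proof.
  intros Hu H. rewrite <- (dec_ok K d c N C a u), <- (dec_ok K d c N C b u); auto; try lia.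
  f_equal. apply outi_det; auto; lia.
Qed.

Lemma Qbase L : d 0 + 1 <= L -> Q L.
Proof.
  intros HL u t m Hu Hs Ht Hm HmL. apply Hfree; auto.
  unfold freem. apply in_app_iff; left. apply in_seq; lia.
Qed.

Lemma Qstep L : 1 <= L <= d 0 -> Q (L + 1) -> Q L.
Proof.
  intros HL HQ u t m Hu Hs Ht Hm HmL.
  destruct (Nat.le_gt_cases (m + (L + 1)) (c u)) as [Hlt|Hge]; [apply HQ; auto|].
  assert (Em : m = c u - L) by lia.
  assert (HinU : In u (US K d c S L)).
  { unfold US. apply filter_In. split. apply in_seq; lia.
    rewrite Hs. simpl. unfold inU. apply andb_true_intro. split.
    apply Nat.ltb_lt; lia. apply Nat.leb_le; lia. }
  destruct (US K d c S L) as [|h rest] eqn:EU; [contradiction|].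
  destruct HinU as [Hh|Hrest].
  2:{ rewrite Em. apply Htl; auto. rewrite EU. auto. }
  subst h.
  pose proof (d0_le K d c) as Hd0. fold q in Hd0.
  pose proof (HY t L Ht HL) as HY0. unfold out0 in HY0. fold q in HY0.
  rewrite (proj2 (Nat.ltb_lt _ _) Ht), (proj2 (Nat.ltb_lt (q - L) q) ltac:(lia)) in HY0.
  cbn [andb] in HY0.
  set (term := fun w x => shiftbit (q - g0 d c x) (enc C x (W w x) t) (q - L)).
  assert (Hc : term a u = term b u).
  { apply (xor_cancel (term a) (term b) (all_users K) u).
    - apply seq_NoDup.
    - apply in_seq; lia.
    - intros x Hx Hne. apply in_seq in Hx. unfold term, W. destruct x as [|x].
      + rewrite step2; auto.
      + unfold g0. destruct (S (Datatypes.S x)) eqn:Esx.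
        2:{ rewrite (notS (Datatypes.S x)); auto; lia. }
        pose proof (c_le K d c (Datatypes.S x) ltac:(lia)) as Hcx. fold q in Hcx.
        unfold shiftbit. destruct (Nat.leb (q - c (Datatypes.S x)) (q - L)) eqn:E; auto.
        apply Nat.leb_le in E.
        replace (q - L - (q - c (Datatypes.S x))) with (c (Datatypes.S x) - L) by lia.
        destruct (inU d c L (Datatypes.S x)) eqn:Ei.
        * apply Htl; auto. rewrite EU. simpl.
          assert (Hx2 : In (Datatypes.S x) (US K d c S L)).
          { unfold US. apply filter_In. split. apply in_seq; lia. rewrite Esx, Ei; auto. }
          rewrite EU in Hx2. destruct Hx2; auto. congruence.
        * rewrite (wu (Datatypes.S x)); auto; try lia.
          intros t' m' Ht' Hm'. apply HQ; auto; try lia.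
          unfold inU in Ei. destruct (Nat.ltb (c (Datatypes.S x)) (L + d (Datatypes.S x))) eqn:E1;
          destruct (Nat.leb L (c (Datatypes.S x))) eqn:E2; simpl in Ei; try discriminate;
          [apply Nat.leb_gt in E2|apply Nat.ltb_ge in E1|apply Nat.ltb_ge in E1]; lia.
    - exact HY0. }
  unfold term, W in Hc. destruct u as [|u]; [lia|]. unfold g0 in Hc.
  pose proof (c_le K d c (Datatypes.S u) ltac:(lia)) as Hcu. fold q in Hcu.
  unfold shiftbit in Hc. rewrite (proj2 (Nat.leb_le (q - c (Datatypes.S u)) (q - L)) ltac:(lia)) in Hc.
  replace (q - L - (q - c (Datatypes.S u))) with m in Hc by lia. exact Hc.
Qed.

Lemma Q1 : Q 1.
Proof.
  assert (H : forall n L, 1 <= L -> d 0 + 1 <= L + n -> Q L).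
  { induction n; intros L H1 H2.
    - apply Qbase; lia.
    - destruct (Nat.le_gt_cases (d 0 + 1) L). apply Qbase; lia.
      apply Qstep. lia. apply IHn; lia. }
  apply (H (d 0)); lia.
Qed.

Lemma sum_inj : a = b.
Proof.
  apply (msgs_eq K C); auto. intros u Hu. destruct u as [|u]. apply step2.
  destruct (S (Datatypes.S u)) eqn:Es.
  - apply wu; try lia. intros t m Ht Hm.
    destruct (Nat.le_gt_cases (c (Datatypes.S u)) m).
    + apply Hfree; auto; try lia. unfold freem. apply in_app_iff; right. apply in_seq; lia.
    + apply Q1; auto; lia.
  - apply notS; auto; lia.
Qed.
End SumInj.
Open Scope nat_scope.

Lemma sum_max1 {A} (x : A -> nat) l :
  list_sum (map (fun L => Nat.max (x L) 1) l) = length l + list_sum (map (fun L => x L - 1) l).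
Proof. induction l; simpl; auto. rewrite IHl. lia. Qed.

Lemma Isum_len K d c S N : length (Isum K d c S N) = N * (ffree K d c S + sum_fk K d c S).
Proof.
  unfold Isum. rewrite (flat_map_constant_length (c := ffree K d c S + sum_fk K d c S)).
  - rewrite length_seq; auto.
  - intros t _. unfold Iblock. rewrite !length_app, length_map, length_seq, !length_flat_map.
    unfold sum_fk, fk. change (fold_right Nat.add 0) with list_sum.
    rewrite sum_max1, length_seq.
    rewrite (map_ext (fun x => length (map (fun u => IX u t (c u - x)) (tl (US K d c S x))))
       (fun L => length (filter (fun i => (S i && inU d c L i)%bool) (users K)) - 1)).
    2:{ intros L. rewrite length_map, length_tl. auto. }
    unfold ffree. change (fold_right Nat.add 0) with list_sum.
    rewrite (map_ext (fun x => length (map (fun m => IX x t m) (freem d c x))) (ffree1 d c)).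
    2:{ intros u. rewrite length_map. unfold freem, ffree1. rewrite length_app, !length_seq. lia. }
    lia.
Qed.

Lemma main_count K d c N C P I :
  (forall a b, In a (msgs K C) -> In b (msgs K C) -> is_error K d c N C a = false ->
     is_error K d c N C b = false -> key K d c N C P I a = key K d c N C P I b -> a = b) ->
  length (filter (fun w => negb (is_error K d c N C w)) (msgs K C))
    <= prodl (sizes' P K C) * 2 ^ (length I).
Proof.
  intros Hinj.
  rewrite <- allbits_len, <- tuples_len, <- length_prod.
  apply count_bound with (key := key K d c N C P I).
  - apply tuples_nodup.
  - intros a b Ha Hb Ga Gb. apply Hinj; auto.
    destruct (is_error K d c N C a); auto; discriminate.
    destruct (is_error K d c N C b); auto; discriminate.
  - intros a Ha _. apply key_in; auto.
Qed.

Lemma prodl_split (f : nat -> nat) (P : nat -> bool) l :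
  prodl (map f l) = prodl (map (fun u => if P u then f u else 1) l) *
                    prodl (map (fun u => if P u then 1 else f u) l).
Proof. induction l; simpl; auto. rewrite IHl. destruct (P a); lia. Qed.

Lemma prodl_pos l : (forall x, In x l -> 1 <= x) -> 1 <= prodl l.
Proof. induction l; simpl; intros H; auto. specialize (IHl (fun x Hx => H x (or_intror Hx))).
  specialize (H a (or_introl eq_refl)). nia. Qed.

Open Scope R_scope.

Lemma real_bound K d c N C P n :
  (forall u, (u <= K)%nat -> (1 <= msz C u)%nat) ->
  (length (filter (fun w => negb (is_error K d c N C w)) (msgs K C)) <= prodl (sizes' P K C) * 2 ^ n)%nat ->
  INR (prodl (map (fun u => if P u then msz C u else 1%nat) (all_users K))) * (1 - Perr K d c N C) <= 2 ^ n.
Proof.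
  intros Hm Hc. unfold Perr.
  pose proof (filter_compl (is_error K d c N C) (msgs K C)) as Hfc.
  set (G := length (filter (fun w => negb (is_error K d c N C w)) (msgs K C))) in *.
  set (E := length (filter (is_error K d c N C) (msgs K C))) in *.
  assert (HM : length (msgs K C) = (prodl (map (fun u => if P u then msz C u else 1%nat) (all_users K)) * prodl (sizes' P K C))%nat).
  { unfold msgs. rewrite tuples_len. unfold sizes'. apply prodl_split. }
  set (MP := prodl (map (fun u => if P u then msz C u else 1%nat) (all_users K))) in *.
  set (Ms := prodl (sizes' P K C)) in *.
  assert (HMs : (1 <= Ms)%nat).
  { apply prodl_pos. intros x Hx. unfold sizes' in Hx. apply in_map_iff in Hx.
    destruct Hx as [u [<- Hu]]. apply in_seq in Hu. destruct (P u); auto. apply Hm; lia. }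
  assert (HMP : (1 <= MP)%nat).
  { apply prodl_pos. intros x Hx. apply in_map_iff in Hx.
    destruct Hx as [u [<- Hu]]. apply in_seq in Hu. destruct (P u); auto. apply Hm; lia. }
  rewrite HM.
  assert (E1 : INR E + INR G = INR MP * INR Ms) by (rewrite <- plus_INR, <- mult_INR; f_equal; lia).
  apply le_INR in Hc. rewrite mult_INR, pow_INR in Hc. replace (INR 2) with 2 in Hc by (simpl; lra).
  apply le_INR in HMs, HMP. simpl in HMs, HMP.
  rewrite mult_INR.
  replace (INR MP * (1 - INR E / (INR MP * INR Ms))) with (INR G / INR Ms) by (replace (INR G) with (INR MP * INR Ms - INR E) by lra; field; lra).
  apply Rmult_le_reg_r with (INR Ms); [lra|].
  unfold Rdiv. rewrite Rmult_assoc, Rinv_l by lra. lra.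
Qed.

Lemma Rpower_pos x : 0 < Rpower 2 x.
Proof. unfold Rpower. apply exp_pos. Qed.

Lemma rate_prod (f : nat -> nat) (r : nat -> R) (N : nat) (P : nat -> bool) l :
  (forall u, In u l -> Rpower 2 (INR N * r u) <= INR (f u)) ->
  Rpower 2 (INR N * fold_right Rplus 0 (map r (filter P l))) <=
  INR (prodl (map (fun u => if P u then f u else 1%nat) l)).
Proof.
  induction l as [|u l IH]; intros H; simpl.
  - rewrite Rmult_0_r, Rpower_O by lra. lra.
  - assert (IH' := IH (fun x Hx => H x (or_intror Hx))).
    destruct (P u); simpl.
    + rewrite mult_INR, Rmult_plus_distr_l, Rpower_plus.
      apply Rmult_le_compat; try apply Rlt_le, Rpower_pos; auto. apply H; left; auto.
    + rewrite Nat.add_0_r. auto.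
Qed.

Lemma asympt (R0 B : R) (p : nat -> R) :
  Un_cv p 0 ->
  (forall N, Rpower 2 (INR N * R0) * (1 - p N) <= Rpower 2 (INR N * B)) ->
  R0 <= B.
Proof.
  intros Hcv H. destruct (Rle_or_lt R0 B) as [|Hlt]; auto. exfalso.
  destruct (Hcv (/2) ltac:(lra)) as [N0 HN0].
  destruct (archimed (2 / (R0 - B))) as [Ha _].
  set (n := Z.to_nat (up (2 / (R0 - B)))).
  assert (Hn : 2 / (R0 - B) < INR n).
  { unfold n. rewrite INR_IZR_INZ, Z2Nat.id; auto.
    apply le_IZR. assert (0 < 2 / (R0 - B)) by (apply Rdiv_lt_0_compat; lra). lra. }
  set (N := (N0 + n)%nat).
  assert (HN : INR n <= INR N) by (apply le_INR; unfold N; lia).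
  specialize (HN0 N ltac:(unfold N; lia)). unfold R_dist in HN0. rewrite Rminus_0_r in HN0.
  apply Rabs_def2 in HN0.
  specialize (H N).
  assert (H2 : Rpower 2 (INR N * R0) <= Rpower 2 (INR N * B + 1)).
  { rewrite Rpower_plus, Rpower_1 by lra.
    pose proof (Rpower_pos (INR N * R0)). nra. }
  assert (H3 : INR N * R0 <= INR N * B + 1).
  { destruct (Rle_or_lt (INR N * R0) (INR N * B + 1)); auto.
    pose proof (Rpower_lt 2 _ _ ltac:(lra) H0). lra. }
  assert (H4 : 2 < INR N * (R0 - B)).
  { apply Rmult_lt_reg_r with (/ (R0 - B)). apply Rinv_0_lt_compat; lra.
    rewrite Rmult_assoc, Rinv_r by lra. rewrite Rmult_1_r. unfold Rdiv in Hn. lra. }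
  nra.
Qed.
Open Scope R_scope.

Lemma msz_pos K (code : nat -> Code) r N :
  (forall N i, (i <= K)%nat -> Rpower 2 (INR N * r i) <= INR (msz (code N) i)) ->
  forall u, (u <= K)%nat -> (1 <= msz (code N) u)%nat.
Proof.
  intros H u Hu. specialize (H N u Hu). pose proof (Rpower_pos (INR N * r u)).
  assert (INR 0 < INR (msz (code N) u)) by (simpl; lra). apply INR_lt in H1. lia.
Qed.

Lemma combine K d c (C : Code) (N : nat) (P : nat -> bool) (R0 : R) (n : nat) :
  Rpower 2 (INR N * R0) <= INR (prodl (map (fun u => if P u then msz C u else 1%nat) (all_users K))) ->
  INR (prodl (map (fun u => if P u then msz C u else 1%nat) (all_users K))) * (1 - Perr K d c N C) <= 2 ^ (N * n) ->
  Rpower 2 (INR N * R0) * (1 - Perr K d c N C) <= Rpower 2 (INR N * INR n).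
Proof.
  intros H1 H2. rewrite <- mult_INR, Rpower_pow by lra.
  destruct (Rle_or_lt 0 (1 - Perr K d c N C)).
  - eapply Rle_trans; [|exact H2]. apply Rmult_le_compat_r; auto.
  - pose proof (Rpower_pos (INR N * R0)). pose proof (pow_lt 2 (N * n) ltac:(lra)).
    assert (Rpower 2 (INR N * R0) * (1 - Perr K d c N C) < 0).
    { rewrite Rmult_comm. apply Rmult_neg_pos; auto. } lra.
Qed.

Lemma filter_single l i : NoDup l -> In i l -> filter (fun u => Nat.eqb u i) l = [i].
Proof.
  induction 1 as [|x l Hx Hn IH]; simpl; intros Hi; [contradiction|].
  destruct Hi as [->|Hi].
  - rewrite Nat.eqb_refl. f_equal. clear IH. induction l as [|y l IHl]; simpl; auto.
    destruct (Nat.eqb_spec y i). subst; simpl in Hx; tauto.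
    apply IHl. intro; apply Hx; right; auto. inversion Hn; auto.
  - destruct (Nat.eqb_spec x i). subst; contradiction. auto.
Qed.

Lemma ach_indiv K d c r i : (i <= K)%nat -> achievable K d c r -> r i <= INR (d i).
Proof.
  intros Hi [_ [code [Hm Hcv]]].
  apply (asympt _ _ (fun N => Perr K d c N (code N))); auto.
  intros N. set (C := code N).
  set (P := fun u => Nat.eqb u i).
  assert (Hc := main_count K d c N C P (Iind N d i)).
  rewrite Iind_len in Hc.
  assert (Hr := real_bound K d c N C P (N * d i) (msz_pos K code r N Hm) (Hc ltac:(
    intros a b Ha Hb Ea Eb Hk; apply (indiv_inj K d c N C i a b); auto))).
  apply (combine K d c C N P); auto.
  assert (Hp := rate_prod (msz C) r N P (all_users K) ltac:(intros u Hu; apply Hm; apply in_seq in Hu; lia)).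
  unfold P in Hp. rewrite filter_single in Hp by (apply seq_NoDup || (apply in_seq; lia)).
  simpl in Hp. rewrite Rplus_0_r in Hp. exact Hp.
Qed.

Lemma ach_sum K d c r S : achievable K d c r ->
  r O + rate_sum K S r <= INR (ffree K d c S + sum_fk K d c S).
Proof.
  intros [_ [code [Hm Hcv]]].
  apply (asympt _ _ (fun N => Perr K d c N (code N))); auto.
  intros N. set (C := code N).
  assert (Hc := main_count K d c N C (Pz S) (Isum K d c S N)).
  rewrite Isum_len in Hc.
  assert (Hr := real_bound K d c N C (Pz S) _ (msz_pos K code r N Hm) (Hc ltac:(
    intros a b Ha Hb Ea Eb Hk; unfold key in Hk;
    apply (sum_inj K d c N C S a b); auto;
    [exact (f_equal fst Hk)|
     intros x Hx; exact (map_eq_in _ _ _ (f_equal snd Hk) x Hx)]))).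
  apply (combine K d c C N (Pz S)); auto.
  assert (Hp := rate_prod (msz C) r N (Pz S) (all_users K) ltac:(intros u Hu; apply Hm; apply in_seq in Hu; lia)).
  assert (Ef : filter (Pz S) (all_users K) = 0%nat :: filter S (users K)).
  { unfold all_users. simpl. f_equal. apply filter_ext_in. intros u Hu. apply in_seq in Hu.
    unfold Pz. destruct u; [lia|]. auto. }
  rewrite Ef in Hp. simpl in Hp. exact Hp.
Qed.

Lemma sum_close (r r' : nat -> R) eps l : (forall u, In u l -> r u <= r' u + eps) ->
  fold_right Rplus 0 (map r l) <= fold_right Rplus 0 (map r' l) + INR (length l) * eps.
Proof.
  induction l as [|u l IH]; cbn [map fold_right length]; intros H. simpl; lra.
  rewrite S_INR. specialize (IH (fun x Hx => H x (or_intror Hx))). specialize (H u (or_introl eq_refl)).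
  lra.
Qed.

Lemma eps_arg (x B C0 : R) : 0 <= C0 -> (forall eps, 0 < eps -> x <= B + C0 * eps) -> x <= B.
Proof.
  intros HC H. destruct (Rle_or_lt x B); auto.
  specialize (H ((x - B) / (C0 + 1))).
  assert (Hp : 0 < (x - B) / (C0 + 1)) by (apply Rdiv_lt_0_compat; lra).
  specialize (H Hp).
  assert (C0 * ((x - B) / (C0 + 1)) < x - B).
  { unfold Rdiv. rewrite <- Rmult_assoc. apply Rmult_lt_reg_r with (C0 + 1); [lra|].
    rewrite Rmult_assoc, Rinv_l by lra. nra. }
  lra.
Qed.

Theorem lemma1 (K : nat) (d c : nat -> nat) (r : nat -> R) :
  capacity_region K d c r -> outer_region K d c r.
Proof.
  intros Hcap. split.
  - intros i Hi. split.
    + destruct (Rle_or_lt 0 (r i)); auto. exfalso.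
      destruct (Hcap (- r i) ltac:(lra)) as [r' [[Hnn _] Hcl]].
      specialize (Hnn i Hi). specialize (Hcl i Hi). apply Rabs_def2 in Hcl. lra.
    + apply (eps_arg _ _ 1); [lra|]. intros eps He.
      destruct (Hcap eps He) as [r' [Ha Hcl]].
      pose proof (ach_indiv K d c r' i Hi Ha). specialize (Hcl i Hi). apply Rabs_def2 in Hcl. lra.
  - intros S _. apply (eps_arg _ _ (INR K + 1)); [pose proof (pos_INR K); lra|].
    intros eps He.
    destruct (Hcap eps He) as [r' [Ha Hcl]].
    pose proof (ach_sum K d c r' S Ha).
    assert (H0 : r 0%nat <= r' 0%nat + eps).
    { specialize (Hcl 0%nat ltac:(lia)). apply Rabs_def2 in Hcl. lra. }
    assert (Hs := sum_close r r' eps (filter S (users K)) ltac:(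
      intros u Hu; apply filter_In in Hu; destruct Hu as [Hu _]; apply in_seq in Hu;
      specialize (Hcl u ltac:(lia)); apply Rabs_def2 in Hcl; lra)).
    assert (Hl : INR (length (filter S (users K))) <= INR K).
    { apply le_INR. etransitivity. apply filter_length_le. unfold users. rewrite length_seq; lia. }
    unfold rate_sum in *. nra.
Qed.
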